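(* For all integers $k\geq 1$ and $n\geq 0$, \[ \sum_{i=0}^{n} f_{i}^{(k)} = \sum_{i=0}^{\lfloor n/(k+1) \rfloor} (-1)^{i} \binom{n-ik}{i}2^{n-i(k+1)}. \]
   Context: For an integer $k\geq 1$, the $k$-bonacci numbers $f_n^{(k)}$ ($n\in\mathbb{Z}$) are defined by $f_n^{(k)}=0$ for $n<0$, $f_0^{(k)}=1$, and $f_n^{(k)}=\sum_{i=1}^{k} f_{n-i}^{(k)}$ for $n\geq 1$. Here $\lfloor x\rfloor$ denotes the floor function. *)

(* Defs.v *)
From mathcomp Require Import all_boot all_order all_algebra.
Set Implicit Arguments. Unset Strict Implicit. Unset Printing Implicit Defensive.
Import GRing.Theory Num.Theory.

(* kbon_list k n = [:: f_n; f_{n-1}; ...; f_0] (k-bonacci numbers, f_m = 0 for m < 0) *)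
Fixpoint kbon_list (k n : nat) : seq nat :=
  match n with
  | 0 => [:: 1]
  | n'.+1 => let l := kbon_list k n' in
             (\sum_(i < k) nth 0 l i)%N :: l
  end.

Definition kbon (k n : nat) : nat := head 0 (kbon_list k n).

Definition kbonZ (k : nat) (n : int) : nat :=
  match n with Posz m => kbon k m | Negz _ => 0 end.

Lemma kbon0 k : kbon k 0 = 1. Proof. by []. Qed.

Lemma kbon_list_nth k n j : j <= n -> nth 0 (kbon_list k n) j = kbon k (n - j).
Proof.
elim: n j => [|n IH] [|j] //= Hj; rewrite IH //.
Qed.

Example kbon_tri : [seq kbon 3 i | i <- iota 0 7] = [:: 1; 1; 2; 4; 7; 13; 24]. Proof. by rewrite /kbon /= !(big_ord_recl, big_ord0). Qed.
Example kbon_fib : [seq kbon 2 i | i <- iota 0 6] = [:: 1; 1; 2; 3; 5; 8]. Proof. by rewrite /kbon /= !(big_ord_recl, big_ord0). Qed.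
Example kbon_one : [seq kbon 1 i | i <- iota 0 4] = [:: 1; 1; 1; 1]. Proof. by rewrite /kbon /= !(big_ord_recl, big_ord0). Qed.

(* Main.v *)
Require Import Defs.
From mathcomp Require Import all_boot all_order all_algebra.
From mathcomp Require Import zify ring.
Import GRing.Theory Num.Theory.

Lemma size_kl k j : size (kbon_list k j) = j.+1.
Proof. by elim: j => //= j ->. Qed.

Lemma nthL k j i : nth 0 (kbon_list k j) i = if (i <= j)%N then kbon k (j - i) else 0%N.
Proof.
case: ifP => h; first exact: kbon_list_nth.
apply: nth_default; rewrite size_kl; lia.
Qed.

Lemma kbonS k j : kbon k j.+1 = (\sum_(j.+1 - k <= t < j.+1) kbon k t)%N.
Proof.
have -> : kbon k j.+1 = (\sum_(i<k) nth 0 (kbon_list k j) i)%N by [].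

rewrite (eq_bigr (fun i : 'I_k => if (i <= j)%N then kbon k (j - i) else 0%N)); last by move=> i _; rewrite nthL.
rewrite -(big_mkord xpredT (fun i => if (i <= j)%N then kbon k (j-i) else 0%N)).
set c := minn k j.+1.
rewrite (@big_cat_nat _ _ _ c) //=; last exact: geq_minl.
have -> : (\sum_(c <= i < k) (if (i <= j)%N then kbon k (j-i) else 0%N) = 0)%N.
  rewrite big_nat_cond big1 //.
  move=> i /andP[/andP[h1 h2] _]; have : (j < i)%N by rewrite /c in h1; lia.
  by rewrite ltnNge => /negbTE ->.
rewrite addn0.
have -> : (j.+1 - k = 0 + (j.+1 - c))%N by rewrite /c; lia.
rewrite big_addn.
have -> : (j.+1 - (j.+1 - c) = c)%N by rewrite /c; lia.
rewrite big_nat_rev /=.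
apply: eq_big_nat => i /andP[_ hi].
rewrite ifT; last by rewrite /c in hi *; lia.
congr kbon; rewrite /c in hi *; lia.
Qed.

Local Open Scope ring_scope.
Lemma sumZ m n (F : nat -> nat) :
  ((\sum_(m <= i < n) F i)%N)%:Z = \sum_(m <= i < n) (F i)%:Z.
Proof. by rewrite -natz natr_sum; apply: eq_bigr => i _; rewrite natz. Qed.

Local Open Scope ring_scope.

Definition S k n : int := \sum_(0 <= i < n.+1) (kbon k i)%:Z.

Lemma S_init k j : (j <= k)%N -> S k j = (2 ^ j)%:Z.
Proof.
elim: j => [|j IH] hj; first by rewrite /S big_nat1.
rewrite /S big_nat_recr //= -/(S k j) kbonS.
have -> : (j.+1 - k = 0)%N by lia.
rewrite sumZ -/(S k j) IH; last lia.
by rewrite expnS mul2n -addnn PoszD.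
Qed.

Lemma S_rec k m : S k (m + k).+1 = 2 * S k (m + k) - S k m.
Proof.
rewrite /S big_nat_recr //= kbonS.
have -> : ((m + k).+1 - k = m.+1)%N by lia.
rewrite sumZ (@big_cat_nat _ _ _ m.+1 0 (m+k).+1) //=; last lia.
set A := \sum_(0 <= i < m.+1) _; set B := \sum_(m.+1 <= i < _) _.
ring.
Qed.

Definition a k n i : int :=
  if (i * k.+1 <= n)%N then (-1) ^+ i * ('C(n - i * k, i))%:Z * (2 ^ (n - i * k.+1))%:Z
  else 0.

Lemma termE k n i :
  (-1) ^+ i * ('C(n - i * k, i))%:Z * (2 ^ (n - i * k.+1))%:Z = a k n i.
Proof.
rewrite /a; case: ifP => // h.
rewrite bin_small ?mulr0 ?mul0r //.
have : (n < i * k.+1)%N by lia.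
case: i h => [|i] h h'; first lia.
rewrite mulnS in h'; lia.
Qed.

Lemma ext k n M N : (M <= N)%N -> (forall i, (M <= i)%N -> (n < i * k.+1)%N) ->
  \sum_(0 <= i < N) a k n i = \sum_(0 <= i < M) a k n i.
Proof.
move=> hMN h; rewrite (@big_cat_nat _ _ _ M) //=.
have -> : \sum_(M <= i < N) a k n i = 0.
  rewrite big_nat_cond big1 //.
  move=> i /andP[/andP[h1 _] _]; rewrite /a ifN //; rewrite -ltnNge; exact: h.
by rewrite addr0.
Qed.

Definition R k n := \sum_(0 <= i < n.+1) a k n i.

Lemma R_init k j : (j <= k)%N -> R k j = (2 ^ j)%:Z.
Proof.
move=> hj; rewrite /R big_nat_recl // big_nat_cond big1 ?addr0.
  by rewrite /a /= mul0n subn0 expr0 mul1r bin0 mul1r.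
move=> i _; rewrite /a ifN //; rewrite mulSn; lia.
Qed.

Lemma a_rec k m i : a k (m + k).+1 i.+1 = 2 * a k (m + k) i.+1 - a k m i.
Proof.
rewrite /a.
have E1 : (i.+1 * k.+1 <= (m + k).+1)%N = (i * k.+1 <= m)%N.
  by apply/idP/idP; rewrite mulSn; lia.
have E2 : (i.+1 * k.+1 <= (m + k))%N = (i * k.+1 < m)%N.
  by apply/idP/idP; rewrite mulSn; lia.
rewrite E1 E2.
case: (ltngtP (i * k.+1) m) => h.
- have e1 : ((m + k).+1 - i.+1 * k = (m - i * k).+1)%N by rewrite mulSn; lia.
  have e2 : ((m + k) - i.+1 * k = (m - i * k))%N by rewrite mulSn; lia.
  have e3 : ((m + k).+1 - i.+1 * k.+1 = (m - i * k.+1))%N by rewrite mulSn; lia.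
  have e4 : ((m + k) - i.+1 * k.+1 = (m - i * k.+1).-1)%N by rewrite mulSn; lia.
  rewrite e1 e2 e3 e4 binS PoszD.
  have -> : (2 ^ (m - i * k.+1))%N = (2 * 2 ^ (m - i * k.+1).-1)%N.
    by rewrite -expnS prednK // subn_gt0.
  rewrite PoszM exprS; ring.
- by rewrite mulr0 subr0.
- have e1 : ((m + k).+1 - i.+1 * k = i.+1)%N by rewrite mulSn; lia.
  have e3 : ((m + k).+1 - i.+1 * k.+1 = 0)%N by rewrite mulSn; lia.
  have e5 : (m - i * k = i)%N by lia.
  have e6 : (m - i * k.+1 = 0)%N by lia.
  rewrite e1 e3 e5 e6 !binn exprS; ring.
Qed.

Lemma R_rec k m : R k (m + k).+1 = 2 * R k (m + k) - R k m.
Proof.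
rewrite /R big_nat_recl //.
under eq_bigr => i _ do rewrite a_rec.
rewrite sumrB -mulr_sumr.
rewrite (@ext k m (m.+1) (m + k).+1); last 2 first.
- lia.
- move=> i hi; rewrite mulnS; lia.
have -> : a k (m + k).+1 0 = 2 * a k (m + k) 0.
  by rewrite /a !mul0n !leq0n !subn0 expr0 !bin0 !mul1r expnS PoszM.
rewrite -(@ext k (m + k) (m + k).+1 (m + k).+2) //; last first.
  move=> i hi; rewrite mulnS; lia.
rewrite [in RHS]big_nat_recl //; ring.
Qed.

Lemma SR k n : S k n = R k n.
Proof.
have H : forall N n, (n <= N)%N -> S k n = R k n.
  elim=> [|N IH] n' hn.
    have -> : n' = 0%N by lia.
    by rewrite S_init // R_init.
  case: (leqP n' k) => hk; first by rewrite S_init // R_init.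
  have -> : n' = ((n' - k.+1) + k).+1 by lia.
  rewrite S_rec R_rec !IH //; lia.
exact: (H n).
Qed.

Theorem theorem2p2 (k n : nat) : (1 <= k)%N ->
  (\sum_(0 <= i < n.+1) (kbon k i)%:Z : int) =
  \sum_(0 <= i < (n %/ k.+1).+1)
     (-1) ^+ i * ('C(n - i * k, i))%:Z * (2 ^ (n - i * k.+1))%:Z.
Proof.
move=> _.
under [RHS]eq_bigr => i _ do rewrite termE.
rewrite -(@ext k n _ n.+1); last 2 first.
- by rewrite ltnS leq_div.
- by move=> i; rewrite -ltn_divLR.
exact: SR.
Qed.
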